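(* Let $v,w\in\mathbb{R}^n\setminus\{0\}$ and $A\in\mathrm{GL}_n(\mathbb{R})$ satisfy $A\circ Q_v=Q_w\circ(A,A)$, i.e. $A(Q_v(\xi,\eta))=Q_w(A\xi,A\eta)$ for all $\xi,\eta\in\mathbb{R}^n$. Then $A=cT$ for some $c>0$ and $T\in O(n)$.
   Context: For $v\in\mathbb{R}^n$, $Q_v:\mathbb{R}^n\times\mathbb{R}^n\to\mathbb{R}^n$ is the symmetric bilinear map $Q_v(\xi,\eta)=\langle\xi,\eta\rangle v-\langle\xi,v\rangle\eta-\langle\eta,v\rangle\xi$, where $\langle\cdot,\cdot\rangle$ is the Euclidean inner product. $O(n)$ is the orthogonal group. *)

(* Defs.v *)
From mathcomp Require Import all_boot all_order all_algebra.
From mathcomp Require Import reals.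
Set Implicit Arguments. Unset Strict Implicit. Unset Printing Implicit Defensive.
Import Order.TTheory GRing.Theory Num.Theory.
Local Open Scope ring_scope.

Definition dotv (R : realType) (n : nat) (x y : 'cV[R]_n) : R := (x^T *m y) 0 0.

Definition Qv (R : realType) (n : nat) (v xi eta : 'cV[R]_n) : 'cV[R]_n :=
  dotv xi eta *: v - dotv xi v *: eta - dotv eta v *: xi.

Definition orthogonal_mx (R : realType) (n : nat) (T : 'M[R]_n) : Prop :=
  T^T *m T = 1%:M.

(* Main.v *)
Require Import Defs.
From mathcomp Require Import all_boot all_order all_algebra.
From mathcomp Require Import reals.
From mathcomp Require Import ring lra.
Import Order.TTheory GRing.Theory Num.Theory.
Local Open Scope ring_scope.

Section Dot.
Variables (R : realType) (n : nat).
Implicit Types x y z : 'cV[R]_n.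

Lemma dotvE x y : dotv x y = \sum_i x i 0 * y i 0.
Proof. by rewrite /dotv mxE; apply: eq_bigr => i _; rewrite mxE. Qed.

Lemma dotvC x y : dotv x y = dotv y x.
Proof. by rewrite !dotvE; apply: eq_bigr => i _; rewrite mulrC. Qed.

Lemma dotvBr x y z : dotv x (y - z) = dotv x y - dotv x z.
Proof. by rewrite /dotv mulmxBr !mxE. Qed.

Lemma dotvBl x y z : dotv (y - z) x = dotv y x - dotv z x.
Proof. by rewrite dotvC dotvBr !(dotvC x). Qed.

Lemma dotvZr a x y : dotv x (a *: y) = a * dotv x y.
Proof. by rewrite /dotv -scalemxAr mxE. Qed.

Lemma dotvA (A : 'M[R]_n) x y : dotv (A *m x) y = dotv x (A^T *m y).
Proof. by rewrite /dotv trmx_mul mulmxA. Qed.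

Lemma dotv_ge0 x : 0 <= dotv x x.
Proof. by rewrite dotvE; apply: sumr_ge0 => i _; rewrite -expr2 sqr_ge0. Qed.

Lemma dotv_eq0 x : dotv x x = 0 -> x = 0.
Proof.
rewrite dotvE => /eqP; rewrite psumr_eq0 => [/allP H|i _]; last by rewrite -expr2 sqr_ge0.
apply/matrixP => i j; rewrite ord1 mxE.
have := H i (mem_index_enum i); rewrite implyTb -expr2 sqrf_eq0.
by move/eqP.
Qed.

Lemma dotv_delta (i : 'I_n) y : dotv (delta_mx i 0) y = y i 0.
Proof.
rewrite dotvE (bigD1 i) //= big1 ?addr0; first by rewrite mxE !eqxx mul1r.
by move=> k /negbTE nk; rewrite mxE nk mul0r.
Qed.

End Dot.

Theorem lemma3p2 (R : realType) (n : nat) (v w : 'cV[R]_n) (A : 'M[R]_n) :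
  v != 0 -> w != 0 -> A \in unitmx ->
  (forall xi eta : 'cV[R]_n, A *m Qv v xi eta = Qv w (A *m xi) (A *m eta)) ->
  exists (c : R) (T : 'M[R]_n), 0 < c /\ orthogonal_mx T /\ A = c *: T.
Proof.
move=> _ wn0 Au H.
set z := invmx A *m w.
have Az : A *m z = w by rewrite /z mulKVmx.
set u := A^T *m w.
have G : forall xi eta, Qv v xi eta =
   dotv (A *m xi) (A *m eta) *: z - dotv xi u *: eta - dotv eta u *: xi.
  move=> xi eta; have := congr1 (mulmx (invmx A)) (H xi eta).
  rewrite mulKmx // => ->.
  by rewrite /Qv !mulmxBr -!scalemxAr !mulKmx // !dotvA.
have S : forall xi eta zeta,
  dotv xi eta * dotv zeta v - dotv xi v * dotv zeta eta - dotv eta v * dotv zeta xi =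
  dotv (A *m xi) (A *m eta) * dotv zeta z - dotv xi u * dotv zeta eta
    - dotv eta u * dotv zeta xi.
  move=> xi eta zeta; have := congr1 (dotv zeta) (G xi eta).
  by rewrite /Qv !dotvBr !dotvZr.
have zn0 : z != 0.
  by apply: contraNneq wn0 => z0; rewrite -Az z0 mulmx0.
have zzp : 0 < dotv z z.
  rewrite lt_def dotv_ge0 andbT; by apply: contraNneq zn0 => /dotv_eq0 ->.
have wwp : 0 < dotv w w.
  rewrite lt_def dotv_ge0 andbT; by apply: contraNneq wn0 => /dotv_eq0 ->.
have zu : dotv z u = dotv w w by rewrite /u -dotvA Az.
have zv : dotv z v = dotv w w.
  have := S z z z; rewrite Az zu => h.
  have : dotv z z * (dotv z v - dotv w w) = 0 by lra.
  by move/eqP; rewrite mulf_eq0 gt_eqF //= subr_eq0 => /eqP.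
have St : forall zeta, dotv z z * dotv zeta v = dotv w w * dotv zeta z.
  move=> zeta; have := S z z zeta; rewrite Az zu zv; lra.
set d := v - u.
have dz : dotv d z = 0 by rewrite dotvBl (@dotvC _ _ v z) (@dotvC _ _ u z) zu zv subrr.
have dv : dotv d v = 0.
  have := St d; rewrite dz mulr0 => /eqP; rewrite mulf_eq0 gt_eqF //= => /eqP //.
have dd0 : dotv d d = 0.
  have := S d d d; rewrite dz dv.
  have -> : dotv d u = - dotv d d by rewrite {2}/d dotvBr dv sub0r opprK.
  move=> h; have : dotv d d * dotv d d = 0 by nra.
  by move/eqP; rewrite mulf_eq0 orbb => /eqP.
have uv : u = v by apply/eqP; rewrite eq_sym -subr_eq0; apply/eqP/dotv_eq0.
set k := dotv w w / dotv z z.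
have kp : 0 < k by rewrite divr_gt0.
have B : forall xi eta, dotv (A *m xi) (A *m eta) = k * dotv xi eta.
  move=> xi eta; have := S xi eta z; rewrite uv (@dotvC _ _ z v) (@dotvC _ _ v z) zv => h.
  have e : dotv (A *m xi) (A *m eta) * dotv z z = dotv w w * dotv xi eta by lra.
  apply: (mulIf (negbT (gt_eqF zzp))); rewrite e /k; field.
  by rewrite gt_eqF.
have AA : A^T *m A = k%:M.
  apply/matrixP => i j.
  have := B (delta_mx i 0) (delta_mx j 0).
  rewrite dotvA mulmxA dotv_delta dotv_delta -colE !mxE => ->.
  by rewrite mulr_natr andbT eq_sym.
set c := Num.sqrt k.
have cp : 0 < c by rewrite sqrtr_gt0.
have c2 : c ^+ 2 = k by rewrite sqr_sqrtr // ltW.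
exists c, (c^-1 *: A); split => //; split.
  rewrite /orthogonal_mx.
  have -> : (c^-1 *: A)^T = c^-1 *: A^T by apply/matrixP => i j; rewrite !mxE.
  rewrite -scalemxAl -scalemxAr scalerA AA -c2.
  apply/matrixP => i j; rewrite !mxE; case: (i == j) => /=; last by rewrite !mulr0.
  have cn0 : c != 0 by rewrite gt_eqF.
  by rewrite mulr1n expr2 -mulrA (mulrA c^-1 c c) mulVf // mul1r mulVf.
by rewrite scalerA mulfV ?gt_eqF // scale1r.
Qed.
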